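(* Let $G$ be a $(P_6,C_5)$-free graph containing a 7-antihole with vertex set $C=\{v_0,\dots,v_6\}$, where $v_iv_j\in E(G)$ iff $2\le |i-j|\le 5$ (indices mod 7). Let $X$ be the set of vertices of $V(G)\setminus C$ with a neighbor in $C$, and $Y=V(G)\setminus(C\cup X)$. A vertex $x\in X$ is a leaf at $v_i$ if $N(x)\cap C=\{v_i\}$; $x$ is big if it is complete to some triangle (three pairwise adjacent vertices) of $C$; $x$ is small if it is neither a leaf nor big. Let $Z_\ell$ be the set of leaves at $v_\ell$ and $Z=\bigcup_\ell Z_\ell$. Then: (1) If $x\in X$ is adjacent to both $v_i$ and $v_{i+1}$ for some $i$, then $x$ is adjacent to at least one of $v_{i-1},v_{i+2}$. (2) If $x\in X$ is small or a leaf, then either (2.1) there is $i$ such that $x$ is nonadjacent to both $v_{i-1},v_{i+2}$ and adjacent to exactly one of $v_i,v_{i+1}$, or (2.2) $N(x)\cap C$ consists of exactly 3 or exactly 4 cyclically consecutive vertices of $C$. (3) Let $\ell\in\{0,\dots,6\}$ and let $x\in X\setminus Z_\ell$ have a neighbor $u\in Y\cup Z_\ell$. Then (3.1) $x$ is not a leaf; (3.2) if $x$ is adjacent to $v_i$ and nonadjacent to each of $v_{i-1},v_{i+1},v_{i+2}$, then $u\in Z_\ell$ and $\ell\in\{i,i+1,i+2\}$; (3.3) if $v\in Y\cup Z_\ell$ is adjacent to $u$ and $x$ is nonadjacent to $v$, then $N(x)\cap C$ contains at least 5 cyclically consecutive vertices of $C$. (4) Let $x\in X$ be a small vertex with a neighbor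 in $Y\cup Z$. Then (4.1) $N(x)\cap C$ consists of exactly 3 or exactly 4 cyclically consecutive vertices of $C$; and (4.2) if $v_j\notin N(x)$, then (a) if $x$ has a neighbor in $Z_j$, then $x$ is complete to $\{v_{j+2},v_{j+3},v_{j-3},v_{j-2}\}$, and (b) if $Z_j\neq\emptyset$, then $x$ is nonadjacent to each of $v_{j-1},v_j,v_{j+1}$. (5) If $x_1,x_2\in X$ are nonadjacent small vertices each having a neighbor in $Y\cup Z$, then $N(x_1)\cap C\subseteq N(x_2)\cap C$ or $N(x_2)\cap C\subseteq N(x_1)\cap C$.
   Context: Graphs are finite and simple; $N(v)$ denotes the set of neighbors of $v$. A graph is $(P_6,C_5)$-free if it has no induced $P_6$ (6-vertex path) and no induced 5-cycle. A 7-antihole is an induced subgraph isomorphic to the complement of the 7-cycle. Vertices $v_i,v_{i+1},\dots,v_{i+k}$ (indices mod 7) are called cyclically consecutive. A vertex is complete (anticomplete) to a set if it is adjacent to all (none) of its vertices. *)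

(* Defs.v *)
From mathcomp Require Import all_boot.
Set Implicit Arguments. Unset Strict Implicit. Unset Printing Implicit Defensive.

(* A finite simple graph: vertex type T (finType), adjacency e : rel T,
   assumed symmetric and irreflexive (as hypotheses of the theorem). *)

Section Graph.
Variables (T : finType) (e : rel T).

Definition has_induced_P6 : Prop :=
  exists f : 'I_6 -> T, injective f /\
    forall i j : 'I_6, e (f i) (f j) = ((i.+1 == j :> nat) || (j.+1 == i :> nat)).

Definition has_induced_C5 : Prop :=
  exists f : 'I_5 -> T, injective f /\
    forall i j : 'I_5, e (f i) (f j) = (((i + 1) %% 5 == j) || ((j + 1) %% 5 == i)).

Definition P6C5_free : Prop := ~ has_induced_P6 /\ ~ has_induced_C5.

Definition absdiff (i j : nat) : nat := if i <= j then j - i else i - j.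

Definition is_7antihole (v : 'I_7 -> T) : Prop :=
  injective v /\
  forall i j : 'I_7, e (v i) (v j) = (2 <= absdiff i j <= 5).

Variable v : 'I_7 -> T.

Definition idx (k : nat) : 'I_7 := inord (k %% 7).
Definition vv (k : nat) : T := v (idx k).

Definition Cset : {set T} := [set v i | i : 'I_7].
Definition Xset : {set T} :=
  [set x | (x \notin Cset) && [exists i : 'I_7, e x (v i)]].
Definition Yset : {set T} := ~: (Cset :|: Xset).

Definition NC (x : T) : {set 'I_7} := [set i : 'I_7 | e x (v i)].

Definition leaf_at (i : 'I_7) (x : T) : Prop := x \in Xset /\ NC x = [set i].
Definition is_leaf (x : T) : Prop := exists i, leaf_at i x.

Definition is_big (x : T) : Prop :=
  x \in Xset /\
  exists i j k : 'I_7, [/\ i != j, j != k, i != k,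
     [&& e (v i) (v j), e (v j) (v k) & e (v i) (v k)] &
     [&& e x (v i), e x (v j) & e x (v k)]].

Definition is_small (x : T) : Prop := [/\ x \in Xset, ~ is_leaf x & ~ is_big x].

Definition Zset (l : 'I_7) : {set T} := [set x in Xset | NC x == [set l]].
Definition Zall : {set T} := \bigcup_(l : 'I_7) Zset l.

Definition consec (k : nat) (S : {set 'I_7}) : Prop :=
  exists i : 'I_7, S = [set idx (i + t) | t : 'I_k].

Definition contains5consec (x : T) : Prop :=
  exists i : 'I_7, forall t, t < 5 -> e x (vv (i + t)).

End Graph.

(* Main.v *)
Require Import Defs.
From mathcomp Require Import all_boot.
Set Implicit Arguments. Unset Strict Implicit. Unset Printing Implicit Defensive.

Definition Aab (a b : nat) : bool := 2 <= absdiff a b <= 5.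
Definition bit (r : seq bool) (k : nat) := nth false r (k %% 7).
Definition Mabs (rows : seq (seq bool)) (ex : nat -> nat -> bool) (a b : nat) : bool :=
  if a < 7 then (if b < 7 then Aab a b else nth false (nth [::] rows (b-7)) a)
  else if b < 7 then nth false (nth [::] rows (a-7)) b
  else if a == b then false else ex (a-7) (b-7).
Fixpoint hasb (A : Type) (a : A -> bool) (s : seq A) : bool :=
  if s is x :: s' then (if a x then true else hasb a s') else false.
Fixpoint allb' (A : Type) (a : A -> bool) (s : seq A) : bool :=
  if s is x :: s' then (if a x then allb' a s' else false) else true.
Fixpoint pathok (M : nat -> nat -> bool) (p : seq nat) : bool :=
  match p with a :: ((b :: _) as q) => if M a b then pathok M q else false | _ => true end.
Definition checkP6 n (M : nat -> nat -> bool) (p : seq nat) :=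
  if size p == 6 then if all (fun a => a < n) p then if pathok M p then if uniq p then
   allb' (fun i => allb' (fun j => M (nth 0 p i) (nth 0 p j) == ((i.+1 == j) || (j.+1 == i))) (iota 0 6)) (iota 0 6)
  else false else false else false else false.
Definition checkC5 n (M : nat -> nat -> bool) (p : seq nat) :=
  if size p == 5 then if all (fun a => a < n) p then if pathok M p then if uniq p then
   allb' (fun i => allb' (fun j => M (nth 0 p i) (nth 0 p j) == (((i + 1) %% 5 == j) || ((j + 1) %% 5 == i))) (iota 0 5)) (iota 0 5)
  else false else false else false else false.
Definition mkmat n (M : nat -> nat -> bool) : seq (seq bool) :=
  [seq [seq M a b | b <- iota 0 n] | a <- iota 0 n].
Definition matf (A : seq (seq bool)) (a b : nat) : bool := nth false (nth [::] A a) b.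
Definition badc (cs : seq (seq nat)) n (M : nat -> nat -> bool) :=
  let A := mkmat n M in
  hasb (fun p => if checkP6 n (matf A) p then true else checkC5 n (matf A) p) cs.
Definition candsE1 : seq (seq nat) := [:: [:: 6; 4; 7; 5; 3]; [:: 3; 7; 4; 2; 5]; [:: 7; 3; 1; 4; 2]; [:: 4; 6; 7; 5; 0]; [:: 0; 2; 6; 1; 7]; [:: 7; 6; 1; 5; 0]; [:: 3; 0; 2; 7; 1]].
Definition candsE2 : seq (seq nat) := [:: [:: 7; 4; 2; 5; 3]; [:: 6; 4; 7; 5; 3]; [:: 2; 4; 1; 3; 7]; [:: 3; 0; 2; 7; 1]; [:: 0; 2; 6; 1; 7]; [:: 7; 6; 1; 5; 0]; [:: 4; 6; 7; 5; 0]].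
Definition candsE3 : seq (seq nat) := [:: [:: 9; 8; 7; 3; 6; 4]; [:: 9; 8; 7; 2; 6; 3]; [:: 5; 3; 6; 7; 8; 9]; [:: 2; 5; 3; 7; 8; 9]; [:: 9; 8; 7; 5; 2; 6]; [:: 4; 6; 7; 5; 0]; [:: 1; 4; 0; 7; 8; 9]; [:: 9; 8; 7; 4; 1; 5]; [:: 0; 5; 1; 7; 8; 9]; [:: 3; 0; 4; 7; 8; 9]; [:: 8; 7; 6; 1; 5; 0]; [:: 0; 2; 6; 1; 7]; [:: 8; 7; 5; 0; 4; 6]; [:: 1; 6; 2; 0; 7; 8]; [:: 2; 0; 3; 1; 7; 8]; [:: 1; 6; 2; 7; 8; 9]; [:: 9; 8; 7; 3; 0; 2]; [:: 3; 1; 4; 2; 7; 8]; [:: 5; 3; 6; 4; 7; 8]; [:: 3; 1; 4; 7; 8; 9]; [:: 4; 2; 5; 3; 7; 8]; [:: 9; 8; 7; 1; 4; 2]; [:: 2; 4; 1; 3; 7]; [:: 9; 8; 7; 5; 2; 4]; [:: 6; 4; 0; 7; 8; 9]; [:: 3; 0; 2; 7; 1]; [:: 9; 8; 7; 6; 2; 0]; [:: 7; 6; 1; 5; 0]; [:: 5; 0; 4; 6; 8; 9]; [:: 3; 1; 4; 2; 8; 9]; [:: 2; 7; 8; 1; 6]; [:: 9; 8; 4; 2; 5; 3]; [:: 0; 5; 8; 7; 4]; [:: 2; 6; 7; 8; 0]; [:: 8; 9; 2; 0; 3; 1]; [:: 2; 5; 3; 8; 7]; [:: 5; 0; 4; 6;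 9; 8]; [:: 0; 2; 6; 1; 9; 8]; [:: 8; 9; 4; 2; 5; 3]; [:: 8; 1; 3; 0; 7]; [:: 7; 4; 2; 5; 3]; [:: 3; 6; 8; 7; 0]; [:: 7; 8; 0; 5; 1]; [:: 5; 0; 4; 6; 7; 8]; [:: 4; 2; 5; 3; 9; 8]; [:: 3; 1; 4; 7; 8]; [:: 3; 7; 8; 4; 6]; [:: 7; 8; 5; 3; 6]; [:: 9; 8; 7; 4; 0; 5]; [:: 8; 7; 1; 4; 2]; [:: 6; 1; 5; 7; 8]; [:: 6; 2; 8; 7; 3]; [:: 7; 8; 4; 2; 5]; [:: 6; 4; 0; 5; 9; 8]; [:: 7; 8; 9; 0; 3]; [:: 6; 4; 7; 5; 3]; [:: 9; 8; 7; 4; 2; 5]; [:: 1; 3; 0; 7; 8; 9]; [:: 8; 7; 2; 0; 3; 1]; [:: 4; 0; 3; 7; 8; 9]; [:: 8; 7; 5; 3; 6; 4]; [:: 9; 8; 7; 5; 1; 6]; [:: 7; 3; 0; 2; 8]; [:: 0; 2; 6; 1; 7; 8]; [:: 8; 7; 3; 1; 4; 2]; [:: 7; 8; 6; 4; 0]; [:: 9; 8; 7; 2; 5; 3]; [:: 3; 1; 4; 2; 8; 7]; [:: 0; 5; 1; 6; 8; 7]].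
Definition candsE4a : seq (seq nat) := [:: [:: 7; 4; 2; 5; 3]; [:: 6; 4; 7; 5; 3]; [:: 2; 4; 1; 3; 7]; [:: 3; 0; 2; 7; 1]; [:: 0; 2; 6; 1; 7]; [:: 7; 6; 1; 5; 0]; [:: 4; 6; 7; 5; 0]; [:: 3; 1; 4; 2; 7; 8]; [:: 8; 7; 3; 1; 4; 2]; [:: 5; 3; 6; 4; 7; 8]; [:: 0; 2; 6; 1; 7; 8]; [:: 8; 7; 6; 4; 0; 5]; [:: 1; 6; 2; 0; 7; 8]; [:: 8; 7; 5; 3; 6; 4]; [:: 3; 5; 2; 4; 7; 8]; [:: 1; 3; 0; 2; 7; 8]; [:: 2; 5; 3; 8; 7]; [:: 7; 8; 5; 3; 6]; [:: 8; 7; 3; 5; 2; 4]; [:: 6; 3; 7; 8; 2]; [:: 8; 7; 6; 1; 5; 0]; [:: 3; 7; 8; 4; 6]; [:: 7; 8; 6; 4; 0]; [:: 8; 7; 0; 3; 1]; [:: 7; 8; 0; 5; 1]; [:: 2; 0; 3; 1; 7; 8]; [:: 8; 7; 5; 0; 4; 6]; [:: 5; 3; 6; 4; 8; 7]; [:: 8; 7; 1; 4; 2]; [:: 7; 8; 4; 2; 5]; [:: 3; 1; 4; 7; 8]; [:: 0; 5; 8; 7; 4]; [:: 2; 7; 8; 1; 6]; [:: 6; 1; 5; 7; 8]; [:: 2; 6; 7; 8; 0]; [:: 4; 6; 3; 5; 8; 7]; [:: 4; 2; 5; 3; 8; 7]; [:: 3; 5; 2; 4; 8; 7]; [:: 6;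 1; 5; 0; 7; 8]; [:: 3; 1; 4; 2; 8; 7]; [:: 7; 8; 3; 1; 4; 2]; [:: 7; 8; 5; 0; 4; 6]; [:: 5; 0; 4; 6; 8; 7]; [:: 6; 1; 5; 0; 8; 7]; [:: 0; 5; 1; 6; 8; 7]; [:: 7; 3; 0; 2; 8]; [:: 1; 6; 2; 0; 8; 7]; [:: 0; 2; 6; 1; 8; 7]; [:: 7; 8; 1; 3; 0; 2]; [:: 7; 8; 2; 0; 3; 1]].
Definition candsE4b : seq (seq nat) := [:: [:: 3; 0; 2; 7; 1]; [:: 7; 4; 2; 5; 3]; [:: 2; 4; 1; 3; 7]; [:: 6; 4; 7; 5; 3]; [:: 5; 0; 4; 6; 7]; [:: 7; 6; 1; 5; 0]; [:: 1; 6; 2; 0; 7]; [:: 8; 7; 3; 5; 2; 4]; [:: 8; 7; 4; 6; 3; 5]; [:: 8; 7; 5; 3; 6; 4]; [:: 8; 7; 6; 1; 5; 0]; [:: 2; 0; 3; 1; 7; 8]; [:: 8; 7; 2; 4; 1; 3]; [:: 8; 7; 0; 2; 6; 1]; [:: 8; 7; 5; 0; 4; 6]; [:: 0; 2; 6; 1; 7; 8]; [:: 5; 0; 4; 6; 7; 8]; [:: 8; 7; 3; 1; 4; 2]; [:: 3; 5; 2; 4; 7; 8]; [:: 6; 1; 5; 0; 7; 8]; [:: 8; 7; 2; 0; 3; 1]; [:: 7; 8; 9; 0; 3]; [:: 9; 8; 7; 4; 1]; [:: 6; 2; 9; 8; 7]; [:: 3; 9; 8; 7; 0]; [:: 8;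 9; 4; 1; 7]; [:: 9; 5; 2; 7; 8]; [:: 3; 6; 9; 8; 7]; [:: 8; 7; 1; 5; 0; 9]; [:: 9; 0; 2; 6; 7; 8]; [:: 9; 1; 3; 0; 7; 8]; [:: 8; 7; 2; 6; 1; 9]; [:: 8; 7; 1; 4; 2; 9]; [:: 8; 7; 3; 0; 2; 9]; [:: 8; 7; 2; 5; 3; 9]; [:: 9; 3; 1; 4; 7; 8]; [:: 9; 4; 6; 3; 7; 8]; [:: 9; 4; 2; 5; 7; 8]; [:: 8; 7; 6; 3; 5; 9]; [:: 8; 7; 4; 0; 5; 9]; [:: 9; 6; 4; 0; 7; 8]; [:: 9; 6; 1; 5; 7; 8]; [:: 7; 8; 0; 5; 1]; [:: 0; 5; 8; 7; 4]; [:: 4; 8; 7; 3; 6]; [:: 2; 4; 1; 7; 8]; [:: 8; 3; 1; 4; 7]; [:: 8; 7; 0; 3; 1]; [:: 7; 8; 6; 4; 0]; [:: 4; 2; 5; 3; 8; 9]; [:: 8; 9; 1; 3; 0; 2]; [:: 8; 9; 2; 0; 3; 1]; [:: 8; 9; 3; 1; 4; 2]; [:: 8; 9; 4; 2; 5; 3]; [:: 8; 9; 5; 3; 6; 4]; [:: 2; 6; 7; 8; 0]; [:: 7; 3; 0; 2; 8]; [:: 7; 8; 9; 0; 3; 1]; [:: 7; 8; 4; 2; 5]; [:: 2; 7; 8; 1; 6]; [:: 6; 1; 5; 7; 8]; [:: 7; 8; 5; 3; 6]; [:: 2; 5; 3; 8; 7]; [:: 7; 8; 9; 6; 3; 5];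 [:: 8; 1; 6; 2; 0; 9]; [:: 7; 8; 5; 0; 4; 6]; [:: 5; 0; 4; 6; 8; 7]; [:: 8; 6; 1; 5; 0; 9]; [:: 7; 8; 1; 3; 0; 2]; [:: 7; 8; 2; 0; 3; 1]; [:: 9; 1; 6; 2; 0; 8]; [:: 3; 1; 4; 2; 8; 7]; [:: 7; 8; 3; 1; 4; 2]; [:: 8; 2; 0; 3; 1; 9]; [:: 6; 1; 5; 0; 8; 7]; [:: 0; 5; 1; 6; 8; 7]; [:: 9; 2; 0; 3; 1; 8]; [:: 4; 2; 5; 3; 8; 7]; [:: 3; 5; 2; 4; 8; 7]; [:: 9; 2; 4; 1; 3; 8]; [:: 1; 6; 2; 0; 8; 7]; [:: 0; 2; 6; 1; 8; 7]; [:: 8; 2; 4; 1; 3; 9]; [:: 5; 3; 6; 4; 8; 7]; [:: 4; 6; 3; 5; 8; 7]; [:: 8; 4; 2; 5; 3; 9]; [:: 8; 3; 5; 2; 4; 9]; [:: 8; 5; 3; 6; 4; 9]; [:: 8; 6; 4; 0; 5; 9]; [:: 8; 4; 6; 3; 5; 9]; [:: 8; 0; 5; 1; 6; 9]; [:: 9; 6; 4; 0; 5; 8]; [:: 5; 7; 8; 9; 1]; [:: 9; 2; 4; 7; 8]; [:: 8; 7; 5; 3; 9]; [:: 8; 5; 1; 4; 9]; [:: 0; 5; 9; 8; 7]].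
Definition candsE5 : seq (seq nat) := [:: [:: 9; 7; 2; 8; 10]; [:: 6; 7; 9; 10; 8]; [:: 6; 3; 7; 9; 8]; [:: 3; 6; 7; 9; 8]; [:: 7; 9; 10; 8; 4]; [:: 9; 7; 4; 1; 8]; [:: 1; 4; 8; 9; 7]; [:: 10; 8; 0; 7; 9]; [:: 9; 7; 2; 5; 8]; [:: 8; 2; 5; 7; 9]; [:: 10; 8; 6; 3; 7; 9]; [:: 9; 7; 1; 5; 8; 10]; [:: 10; 8; 2; 6; 7; 9]; [:: 9; 7; 4; 1; 8; 10]; [:: 9; 7; 3; 8; 10]; [:: 9; 7; 0; 4; 8; 10]; [:: 8; 9; 7; 4; 0]; [:: 9; 7; 0; 4; 8]; [:: 7; 1; 8; 10; 9]; [:: 8; 10; 9; 7; 5]; [:: 10; 8; 6; 2; 7; 9]; [:: 9; 7; 5; 2; 8; 10]; [:: 10; 8; 3; 6; 7; 9]; [:: 9; 7; 3; 0; 8; 10]; [:: 2; 5; 3; 8; 7]; [:: 7; 8; 5; 3; 6]; [:: 3; 7; 8; 4; 6]; [:: 7; 8; 6; 4; 0]; [:: 8; 7; 1; 4; 2]; [:: 7; 8; 4; 2; 5]; [:: 7; 8; 0; 5; 1]; [:: 0; 5; 8; 7; 4]; [:: 2; 7; 8; 1; 6]; [:: 6; 1; 5; 7; 8]; [:: 8; 0; 2; 6; 7]; [:: 8; 3; 1; 4; 7]; [:: 8; 1; 3; 0; 7]; [:: 3; 7; 8; 2; 0]; [:: 7; 9; 8; 1; 5]; [:: 9; 8; 6;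 2; 7]; [:: 9; 7; 1; 5; 8]; [:: 9; 7; 0; 3; 8]; [:: 9; 8; 2; 6; 7]; [:: 3; 7; 9; 8; 0]; [:: 10; 8; 5; 2; 7; 9]; [:: 10; 8; 4; 1; 7; 9]; [:: 9; 7; 0; 3; 8; 10]; [:: 10; 8; 1; 5; 7; 9]; [:: 10; 8; 0; 4; 7; 9]; [:: 4; 2; 5; 3; 8; 7]; [:: 3; 5; 2; 4; 8; 7]; [:: 6; 1; 5; 0; 8; 7]; [:: 0; 5; 1; 6; 8; 7]; [:: 7; 8; 1; 3; 0; 2]; [:: 7; 8; 2; 0; 3; 1]; [:: 3; 1; 4; 2; 8; 7]; [:: 7; 8; 3; 1; 4; 2]; [:: 7; 8; 5; 0; 4; 6]; [:: 5; 0; 4; 6; 8; 7]; [:: 1; 6; 2; 0; 8; 7]; [:: 0; 2; 6; 1; 8; 7]; [:: 5; 3; 6; 4; 8; 7]; [:: 4; 6; 3; 5; 8; 7]; [:: 1; 7; 0; 8; 6]; [:: 3; 8; 4; 2; 7]; [:: 7; 1; 3; 8; 2]; [:: 0; 5; 8; 6; 7]; [:: 2; 0; 7; 1; 8]; [:: 4; 8; 5; 7; 6]; [:: 7; 0; 8; 1; 6]; [:: 7; 4; 8; 3; 5]; [:: 0; 2; 7; 1; 8]; [:: 3; 7; 4; 8; 5]; [:: 1; 3; 7; 2; 8]; [:: 4; 6; 8; 5; 7]; [:: 2; 4; 7; 3; 8]; [:: 6; 7; 5; 0; 8]; [:: 7; 0; 4; 6; 9]; [:: 9; 3; 5; 2;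 8; 10]; [:: 9; 2; 4; 1; 8; 10]; [:: 4; 6; 3; 7; 9]; [:: 10; 8; 1; 5; 0; 9]; [:: 9; 1; 6; 2; 8; 10]; [:: 9; 7; 2; 5; 3]; [:: 10; 8; 0; 4; 6; 9]; [:: 7; 6; 3; 5; 9]; [:: 10; 8; 0; 3; 1; 9]; [:: 2; 9; 7; 1; 4]; [:: 9; 5; 3; 6; 8; 10]; [:: 9; 4; 2; 5; 7]; [:: 9; 0; 2; 6; 8; 10]; [:: 1; 3; 0; 7; 9]; [:: 10; 8; 5; 2; 4; 9]; [:: 10; 8; 5; 1; 6; 9]; [:: 9; 3; 1; 4; 7]; [:: 0; 5; 1; 7; 9]; [:: 10; 8; 3; 6; 4; 9]; [:: 9; 7; 4; 0; 5]; [:: 9; 2; 0; 3; 8; 10]; [:: 10; 8; 4; 1; 3; 9]; [:: 6; 1; 9; 7; 2]; [:: 10; 8; 4; 0; 5; 9]; [:: 5; 7; 9; 6; 1]; [:: 2; 6; 7; 9; 0]; [:: 9; 2; 0; 3; 7]; [:: 4; 2; 5; 8; 10; 9]; [:: 5; 3; 7; 9; 10; 8]; [:: 6; 1; 5; 8; 10; 9]; [:: 5; 0; 4; 8; 10; 9]; [:: 9; 10; 8; 4; 1; 3]; [:: 9; 10; 8; 3; 6; 4]; [:: 9; 10; 8; 2; 5; 3]; [:: 9; 10; 8; 1; 4; 2]; [:: 8; 10; 9; 7; 6; 1]; [:: 1; 3; 7; 9; 10; 8]; [:: 7; 9; 10; 8; 1; 6]; [:: 9; 7; 0; 4; 6;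 10]; [:: 9; 7; 3; 6; 4; 10]; [:: 9; 7; 3; 5; 8; 4]; [:: 10; 3; 5; 2; 7; 9]; [:: 10; 5; 3; 6; 7; 9]; [:: 3; 8; 4; 2; 7; 9]; [:: 9; 7; 1; 4; 2; 10]; [:: 9; 7; 5; 2; 4; 10]; [:: 2; 8; 3; 1; 7; 9]; [:: 10; 1; 3; 0; 7; 9]; [:: 9; 7; 0; 2; 8; 1]; [:: 9; 7; 4; 1; 3; 10]; [:: 10; 0; 5; 1; 7; 9]; [:: 5; 8; 6; 4; 7; 9]; [:: 10; 5; 0; 4; 7; 9]; [:: 9; 7; 5; 0; 8; 6]; [:: 9; 7; 2; 6; 1; 10]; [:: 9; 7; 5; 1; 6; 10]; [:: 0; 8; 1; 6; 7; 9]; [:: 10; 0; 2; 6; 7; 9]; [:: 9; 7; 3; 0; 2; 10]; [:: 0; 2; 6; 8; 10; 9]; [:: 9; 10; 8; 3; 0; 2]; [:: 8; 10; 9; 7; 5; 0]; [:: 10; 6; 1; 5; 0; 9]; [:: 9; 3; 1; 4; 2; 10]; [:: 9; 0; 2; 6; 1; 10]; [:: 9; 3; 5; 2; 4; 10]; [:: 10; 3; 1; 4; 2; 9]; [:: 9; 6; 1; 5; 0; 10]; [:: 10; 1; 3; 0; 2; 9]; [:: 10; 5; 0; 4; 6; 9]; [:: 10; 2; 0; 3; 1; 9]; [:: 10; 6; 4; 0; 5; 9]; [:: 10; 0; 2; 6; 1; 9]; [:: 9; 5; 3; 6; 4; 10]; [:: 10; 5; 3; 6; 4; 9]; [:: 9;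 4; 2; 5; 3; 10]; [:: 6; 8; 5; 0; 7; 9]; [:: 9; 7; 6; 4; 8; 5]; [:: 4; 8; 3; 5; 7; 9]; [:: 9; 7; 4; 2; 8; 3]; [:: 0; 8; 6; 1; 7; 9]; [:: 9; 7; 2; 0; 8; 1]; [:: 9; 7; 3; 1; 8; 2]; [:: 3; 9; 8; 2; 5]; [:: 0; 9; 8; 1; 5]; [:: 4; 6; 9; 8; 0]; [:: 8; 1; 4; 2; 9]; [:: 5; 2; 6; 8; 10; 9]; [:: 3; 6; 8; 9; 5]; [:: 9; 1; 3; 0; 8]; [:: 4; 9; 8; 5; 2]; [:: 8; 9; 0; 2; 6]; [:: 3; 6; 4; 9; 8]; [:: 9; 10; 8; 0; 4; 1]; [:: 9; 1; 6; 2; 8]; [:: 0; 4; 8; 9; 5]; [:: 0; 2; 9; 8; 3]; [:: 9; 3; 1; 4; 8]; [:: 5; 1; 6; 9; 8]; [:: 4; 6; 3; 5; 10; 9]; [:: 10; 9; 0; 2; 6; 1]; [:: 9; 7; 0; 4; 10]; [:: 0; 3; 10; 9; 7]; [:: 10; 9; 3; 5; 2; 4]; [:: 10; 2; 4; 7; 9]; [:: 7; 9; 5; 8; 6; 4]; [:: 6; 4; 8; 5; 9; 7]; [:: 7; 9; 4; 8; 5; 3]; [:: 5; 3; 8; 4; 9; 7]; [:: 4; 2; 8; 3; 9; 7]; [:: 2; 4; 8; 3; 9; 7]; [:: 7; 9; 2; 8; 1; 3]; [:: 1; 3; 8; 2; 9; 7]; [:: 7; 9; 6; 8; 0; 5];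 [:: 0; 5; 8; 6; 9; 7]; [:: 6; 1; 8; 0; 9; 7]; [:: 1; 6; 8; 0; 9; 7]; [:: 2; 0; 8; 1; 9; 7]; [:: 7; 9; 1; 8; 2; 0]; [:: 5; 9; 10; 8; 6; 4]].

Fixpoint allb k : seq (seq bool) :=
  if k is k'.+1 then [seq b :: s | b <- [:: true; false], s <- allb k'] else [:: [::]].
Definition rows7 := allb 7.
Definition zeros := nseq 7 false.
Definition ind l := [seq m == l | m <- iota 0 7].
Definition types := zeros :: [seq ind m | m <- iota 0 7].
Definition bools := [:: true; false].
Definition nz r := has (bit r) (iota 0 7).
Definition leafb r := has (fun i => all (fun m => bit r m == (m == i)) (iota 0 7)) (iota 0 7).
Definition bigb r := has (fun a => has (fun b => has (fun c =>
  [&& Aab a b, Aab b c, Aab a c, bit r a, bit r b & bit r c]) (iota 0 7)) (iota 0 7)) (iota 0 7).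
Definition smallb r := [&& nz r, ~~ leafb r & ~~ bigb r].
Definition consecb k r := has (fun i => all (fun m => bit r m == ((m + 7 - i) %% 7 < k)) (iota 0 7)) (iota 0 7).
Definition c5b r := has (fun i => all (fun t => bit r (i + t)) (iota 0 5)) (iota 0 7).
Definition subb r1 r2 := all (fun m => bit r1 m ==> bit r2 m) (iota 0 7).

Definition M1 r := Mabs [:: r] (fun _ _ => false).
Definition M2 r ur (b : bool) := Mabs [:: r; ur] (fun _ _ => b).
Definition ex3 (b01 b02 b12 : bool) (i j : nat) : bool :=
  match i, j with 0, 1 | 1, 0 => b01 | 0, 2 | 2, 0 => b02 | 1, 2 | 2, 1 => b12 | _, _ => false end.
Definition ex4 (b01 b02 b03 b12 b13 b23 : bool) (i j : nat) : bool :=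
  match i, j with 0, 1 | 1, 0 => b01 | 0, 2 | 2, 0 => b02 | 0, 3 | 3, 0 => b03
  | 1, 2 | 2, 1 => b12 | 1, 3 | 3, 1 => b13 | 2, 3 | 3, 2 => b23 | _, _ => false end.
Definition M3 rows b01 b02 b12 := Mabs rows (ex3 b01 b02 b12).
Definition M4 rows b01 b02 b03 b12 b13 b23 := Mabs rows (ex4 b01 b02 b03 b12 b13 b23).

Definition orB (c b : bool) := if c then true else b.
Definition E1 := all (fun r =>
  orB (all (fun i => bit r i ==> bit r (i+1) ==> bit r (i+6) || bit r (i+2)) (iota 0 7))
      (badc candsE1 8 (M1 r))) rows7.
Definition E2 := all (fun r => if nz r && (~~ bigb r || leafb r) then
  orB (has (fun i => [&& ~~ bit r (i+6), ~~ bit r (i+2) & bit r i != bit r (i+1)]) (iota 0 7)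
   || consecb 3 r || consecb 4 r) (badc candsE2 8 (M1 r)) else true) rows7.
Definition E3 := all (fun l => all (fun r => all (fun ur =>
  if nz r && (r != ind l) then
  orB (~~ leafb r &&
      all (fun i => [&& bit r i, ~~ bit r (i+6), ~~ bit r (i+1) & ~~ bit r (i+2)] ==>
         (ur != zeros) && [|| l == i %% 7, l == (i+1) %% 7 | l == (i+2) %% 7]) (iota 0 7))
    (badc candsE3 9 (M2 r ur true)) &&
  all (fun wr => orB (c5b r) (badc candsE3 10 (M3 [:: r; ur; wr] true false true))) [:: zeros; ind l]
  else true) [:: zeros; ind l]) rows7) (iota 0 7).
Definition SM := [seq r <- rows7 | smallb r].
Definition E4a := all (fun r => all (fun ur =>
  orB ((consecb 3 r || consecb 4 r) &&
  all (fun j => (~~ bit r j && (ur == ind j)) ==>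
    [&& bit r (j+2), bit r (j+3), bit r (j+4), bit r (j+5), ~~ bit r (j+6) & ~~ bit r (j+1)])
    (iota 0 7)) (badc candsE4a 9 (M2 r ur true))) types) SM.
Definition win j := [seq 2 <= (m + 7 - j) %% 7 <= 5 | m <- iota 0 7].
Definition allowed r u := (u == zeros) || has (fun j => (u == ind j) && (bit r j || (r == win j))) (iota 0 7).
Definition E4bf L := all (fun j => all (fun r => if ~~ bit r j then
  orB (~~ bit r (j+6) && ~~ bit r (j+1))
  (all (fun ur => if allowed r ur then
     all (fun buz => badc candsE4b 10 (M3 [:: r; ur; ind j] true false buz)) bools
     else badc candsE4b 9 (M2 r ur true)) types) else true) L) (iota 0 7).
Definition E4b := E4bf SM.
Definition S5 := [seq r <- rows7 | [&& smallb r & consecb 3 r || consecb 4 r]].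
Definition E5f L := all (fun r1 => all (fun r2 =>
  if ~~ subb r1 r2 && ~~ subb r2 r1 then
  all (fun u1 => if allowed r1 u1 then
     badc candsE5 10 (M3 [:: r1; r2; u1] false true true) &&
     orB (badc candsE5 10 (M3 [:: r1; r2; u1] false true false))
     (all (fun u2 => if allowed r2 u2 then
       badc candsE5 10 (M3 [:: r1; r2; u2] false true true) &&
       all (fun b23 => badc candsE5 11 (M4 [:: r1; r2; u1; u2] false true false false true b23)) bools
       else badc candsE5 9 (M2 r2 u2 true)) types)
     else badc candsE5 9 (M2 r1 u1 true)) types
  else true) L) L.
Definition E5 := E5f S5.
Lemma E1T : E1. Proof. vm_compute. reflexivity. Qed.
Lemma E2T : E2. Proof. vm_compute. reflexivity. Qed.
Lemma E3T : E3. Proof. vm_compute. reflexivity. Qed.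
Lemma E4aT : E4a. Proof. vm_compute. reflexivity. Qed.
Lemma E4bT : E4b. Proof. vm_compute. reflexivity. Qed.
Lemma E5T : E5. Proof. vm_compute. reflexivity. Qed.


Lemma hasbE (A : Type) (a : A -> bool) s : hasb a s = has a s.
Proof. by elim: s => //= x s ->; case: (a x). Qed.
Lemma allbE (A : Type) (a : A -> bool) s : allb' a s = all a s.
Proof. by elim: s => //= x s ->; case: (a x). Qed.

Lemma matfE n M a b : a < n -> b < n -> matf (mkmat n M) a b = M a b.
Proof.
move=> ha hb; rewrite /matf /mkmat (nth_map 0) ?size_iota // nth_iota //.
by rewrite (nth_map 0) ?size_iota // nth_iota.
Qed.

Section Sound.
Variables (T : finType) (e : rel T) (Hfree : P6C5_free e).

Lemma check_sound n M (f : nat -> T) :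
  (forall a b, a < n -> b < n -> f a = f b -> a = b) ->
  (forall a b, a < n -> b < n -> e (f a) (f b) = M a b) ->
  forall q, ~~ checkP6 n M q && ~~ checkC5 n M q.
Proof.
move=> finj fadj q; apply/andP; split; apply/negP.
- rewrite /checkP6; case: eqP => // hs; case: ifP => // /allP ha; case: ifP => // _; case: ifP => // hu.
  rewrite allbE => /allP h.
  apply: Hfree.1; exists (fun i : 'I_6 => f (nth 0 q i)); split.
    move=> i j hij; have hi : i < size q by rewrite hs.
    have hj : j < size q by rewrite hs.
    have /eqP := finj _ _ (ha _ (mem_nth 0 hi)) (ha _ (mem_nth 0 hj)) hij.
    by rewrite nth_uniq // => /eqP /val_inj.
  move=> i j; rewrite fadj ?ha ?mem_nth ?hs //.
  have := h i; rewrite mem_iota ltn_ord allbE => /(_ isT) /allP /(_ j).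
  by rewrite mem_iota ltn_ord => /(_ isT) /eqP.
- rewrite /checkC5; case: eqP => // hs; case: ifP => // /allP ha; case: ifP => // _; case: ifP => // hu.
  rewrite allbE => /allP h.
  apply: Hfree.2; exists (fun i : 'I_5 => f (nth 0 q i)); split.
    move=> i j hij; have hi : i < size q by rewrite hs.
    have hj : j < size q by rewrite hs.
    have /eqP := finj _ _ (ha _ (mem_nth 0 hi)) (ha _ (mem_nth 0 hj)) hij.
    by rewrite nth_uniq // => /eqP /val_inj.
  move=> i j; rewrite fadj ?ha ?mem_nth ?hs //.
  have := h i; rewrite mem_iota ltn_ord allbE => /(_ isT) /allP /(_ j).
  by rewrite mem_iota ltn_ord => /(_ isT) /eqP.
Qed.

Lemma nobad cs n M (f : nat -> T) :
  (forall a b, a < n -> b < n -> f a = f b -> a = b) ->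
  (forall a b, a < n -> b < n -> e (f a) (f b) = M a b) ->
  badc cs n M = false.
Proof.
move=> finj fadj; apply/negP; rewrite /badc hasbE => /hasP [q _].
have fadj' : forall a b, a < n -> b < n -> e (f a) (f b) = matf (mkmat n M) a b.
  by move=> a b ha hb; rewrite matfE //; exact: fadj.
have /andP [/negbTE -> /negbTE ->] := check_sound finj fadj' q.
by [].
Qed.
End Sound.

From mathcomp Require Import zify.

Section Graph.
Variables (T : finType) (e : rel T) (e_sym : symmetric e) (e_irr : irreflexive e)
  (Hfree : P6C5_free e) (v : 'I_7 -> T) (Hanti : is_7antihole e v).

Definition rowof (y : T) := [seq e y (vv v k) | k <- iota 0 7].
Definition fC (vs : seq T) (a : nat) := if a < 7 then vv v a else nth (vv v 0) vs (a - 7).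

Lemma vv_inord k : k < 7 -> vv v k = v (inord k).
Proof. by move=> hk; rewrite /vv /idx modn_small. Qed.
Lemma vv_ord (i : 'I_7) : vv v i = v i.
Proof. by rewrite vv_inord // inord_val. Qed.
Lemma vv_mod k : vv v (k %% 7) = vv v k.
Proof. by rewrite /vv /idx modn_mod. Qed.
Lemma rowof_bit y k : bit (rowof y) k = e y (vv v k).
Proof.
rewrite /bit /rowof (nth_map 0) ?size_iota ?ltn_pmod // nth_iota ?ltn_pmod //.
by rewrite add0n vv_mod.
Qed.
Lemma vv_C k : vv v k \in Cset v.
Proof. by apply/imsetP; exists (idx k). Qed.
Lemma v_C i : v i \in Cset v.
Proof. by apply/imsetP; exists i. Qed.
Lemma Aab_v a b : a < 7 -> b < 7 -> e (vv v a) (vv v b) = Aab a b.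
Proof. by move=> ha hb; rewrite !vv_inord // Hanti.2 (inordK ha) (inordK hb). Qed.

Lemma fC_inj vs : uniq vs -> all (fun y => y \notin Cset v) vs ->
  forall a b, a < 7 + size vs -> b < 7 + size vs -> fC vs a = fC vs b -> a = b.
Proof.
move=> hu /allP hc a b ha hb; rewrite /fC; case: ltnP => a7; case: ltnP => b7.
- by rewrite !vv_inord // => /Hanti.1 /(congr1 (@nat_of_ord 7)); rewrite (inordK a7) (inordK b7).
- have hb' : b - 7 < size vs by lia.
  move=> E; have := hc _ (mem_nth (vv v 0) hb'); by rewrite -E vv_C.
- have ha' : a - 7 < size vs by lia.
  move=> E; have := hc _ (mem_nth (vv v 0) ha'); by rewrite E vv_C.
- have ha' : a - 7 < size vs by lia.
  have hb' : b - 7 < size vs by lia.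
  move/eqP; rewrite nth_uniq // => /eqP; lia.
Qed.

Lemma fC_adj vs ex :
  (forall i j, i < size vs -> j < size vs -> i != j ->
     e (nth (vv v 0) vs i) (nth (vv v 0) vs j) = ex i j) ->
  forall a b, a < 7 + size vs -> b < 7 + size vs ->
    e (fC vs a) (fC vs b) = Mabs (map rowof vs) ex a b.
Proof.
move=> hex a b ha hb; rewrite /fC /Mabs; case: ltnP => a7; case: ltnP => b7.
- by rewrite Aab_v.
- have hb' : b - 7 < size vs by lia.
  by rewrite (nth_map (vv v 0)) // /rowof (nth_map 0) ?size_iota // nth_iota // add0n e_sym.
- have ha' : a - 7 < size vs by lia.
  by rewrite (nth_map (vv v 0)) // /rowof (nth_map 0) ?size_iota // nth_iota // add0n.
- have ha' : a - 7 < size vs by lia.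
  have hb' : b - 7 < size vs by lia.
  case: eqP => [->|nab]; first by rewrite e_irr.
  apply: hex => //; apply/eqP; lia.
Qed.

Lemma config cs vs ex : uniq vs -> all (fun y => y \notin Cset v) vs ->
  (forall i j, i < size vs -> j < size vs -> i != j ->
     e (nth (vv v 0) vs i) (nth (vv v 0) vs j) = ex i j) ->
  badc cs (7 + size vs) (Mabs (map rowof vs) ex) = false.
Proof.
move=> hu hc hex; apply: (@nobad _ _ Hfree cs _ _ (fC vs)); first exact: fC_inj.
exact: fC_adj.
Qed.

Lemma size_rowof y : size (rowof y) = 7.
Proof. by rewrite size_map size_iota. Qed.

Lemma allb_mem k s : size s = k -> s \in allb k.
Proof.
elim: k s => [|k IH] [|b s] //= [hs].
by have h := IH _ hs; case: b; rewrite !mem_cat map_f ?orbT.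
Qed.
Lemma rowof_rows7 y : rowof y \in rows7.
Proof. exact/allb_mem/size_rowof. Qed.

Lemma rowof_eq y r : size r = 7 -> (forall k, k < 7 -> e y (vv v k) = nth false r k) ->
  rowof y = r.
Proof.
move=> hs h; apply: (@eq_from_nth _ false); rewrite size_rowof ?hs // => k hk.
by rewrite /rowof (nth_map 0) ?size_iota // nth_iota // add0n h.
Qed.

Lemma nth_ind l k : k < 7 -> nth false (ind l) k = (k == l).
Proof. by move=> hk; rewrite /ind (nth_map 0) ?size_iota // nth_iota. Qed.

Lemma X_prop x : x \in Xset e v -> x \notin Cset v /\ nz (rowof x).
Proof.
rewrite inE => /andP [hc /existsP [i hi]]; split => //.
by apply/hasP; exists (val i); rewrite ?mem_iota ?ltn_ord // rowof_bit vv_ord.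
Qed.

Lemma Y_prop u : u \in Yset e v -> u \notin Cset v /\ rowof u = zeros.
Proof.
rewrite /Yset in_setC in_setU negb_or => /andP [hc hx]; split => //.
apply: rowof_eq => // k hk; rewrite nth_nseq hk.
apply/negP => h; move: hx; rewrite /Xset inE hc /=; apply/negP/negPn/existsP.
by exists (inord k); rewrite -vv_inord.
Qed.

Lemma Z_prop (l : 'I_7) u : u \in Zset e v l -> u \notin Cset v /\ rowof u = ind l.
Proof.
rewrite inE => /andP [hx /eqP hN]; split; first by case/X_prop: hx.
apply: rowof_eq; first by rewrite size_map size_iota.
move=> k hk; rewrite nth_ind // vv_inord //.
have /setP /(_ (inord k)) := hN; rewrite inE in_set1 => ->.
by rewrite -val_eqE /= inordK.
Qed.

Lemma Zall_prop u : u \in Zall e v -> exists l, u \in Zset e v l.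
Proof. by case/bigcupP => l _ h; exists l. Qed.

Lemma YZ_types u : u \in Yset e v :|: Zall e v -> u \notin Cset v /\ rowof u \in types.
Proof.
case/setUP => [/Y_prop [h ->]|/Zall_prop [l /Z_prop [h ->]]]; split => //.
by rewrite /types in_cons; apply/orP; right; apply: map_f; rewrite mem_iota ltn_ord.
Qed.

Lemma YZl_types (l : 'I_7) u : u \in Yset e v :|: Zset e v l ->
  u \notin Cset v /\ rowof u \in [:: zeros; ind l].
Proof.
case/setUP => [/Y_prop [h ->]|/Z_prop [h ->]]; split => //; by rewrite !inE eqxx ?orbT.
Qed.

Lemma leaf_leafb x : is_leaf e v x -> leafb (rowof x).
Proof.
case=> i [hx hN]; apply/hasP; exists (val i); first by rewrite mem_iota ltn_ord.
apply/allP => m; rewrite mem_iota add0n => /andP [_ hm]; rewrite rowof_bit vv_inord //.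
have /setP /(_ (inord m)) := hN; rewrite inE in_set1 => ->.
by rewrite -val_eqE /= inordK.
Qed.

Lemma leafb_leaf x : x \in Xset e v -> leafb (rowof x) -> is_leaf e v x.
Proof.
move=> hx /hasP [i]; rewrite mem_iota add0n => /andP [_ hi] /allP H; exists (inord i); split => //.
apply/setP => m; rewrite inE in_set1.
have := H m; rewrite mem_iota ltn_ord rowof_bit vv_ord => /(_ isT) /eqP ->.
by rewrite -val_eqE /= inordK.
Qed.

Lemma bigb_big x : x \in Xset e v -> bigb (rowof x) -> is_big e v x.
Proof.
move=> hx /hasP [a]; rewrite mem_iota add0n => /andP [_ ha] /hasP [b]; rewrite mem_iota add0n => /andP [_ hb].
move=> /hasP [c]; rewrite mem_iota add0n => /andP [_ hc].
rewrite !rowof_bit -!Aab_v // !vv_inord // => /and5P [h1 h2 h3 h4 /andP [h5 h6]].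
split => //; exists (inord a), (inord b), (inord c); split; rewrite ?h1 ?h2 ?h3 ?h4 ?h5 ?h6 //.
- by apply: contraTneq h1 => ->; rewrite e_irr.
- by apply: contraTneq h2 => ->; rewrite e_irr.
- by apply: contraTneq h3 => ->; rewrite e_irr.
Qed.

Lemma consecb_consec k x : k <= 7 -> consecb k (rowof x) -> consec k (NC e v x).
Proof.
move=> hk /hasP [i]; rewrite mem_iota add0n => /andP [_ hi] /allP H; exists (inord i).
apply/setP => m; rewrite inE.
have := H m; rewrite mem_iota ltn_ord rowof_bit vv_ord => /(_ isT) /eqP ->.
have hm := ltn_ord m.
apply/idP/imsetP.
- move=> h; exists (Ordinal h) => //; apply: val_inj; rewrite /= /idx inordK ?inordK //;
  try lia.
- case=> t _ ->; rewrite /idx !inordK //; try lia.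
  have ht := ltn_ord t; lia.
Qed.

Lemma c5b_c5 x : c5b (rowof x) -> contains5consec e v x.
Proof.
move=> /hasP [i]; rewrite mem_iota add0n => /andP [_ hi] /allP H; exists (inord i) => t ht.
by have := H t; rewrite mem_iota add0n rowof_bit inordK // => ->.
Qed.

Lemma subb_sub x1 x2 : subb (rowof x1) (rowof x2) -> NC e v x1 \subset NC e v x2.
Proof.
move=> /allP H; apply/subsetP => m; rewrite !inE => h.
by have := H m; rewrite mem_iota ltn_ord !rowof_bit !vv_ord h => /(_ isT).
Qed.

End Graph.


Section Main.
Variables (T : finType) (e : rel T) (e_sym : symmetric e) (e_irr : irreflexive e)
  (Hfree : P6C5_free e) (v : 'I_7 -> T) (Hanti : is_7antihole e v).

Local Notation rowof := (rowof e v).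

Lemma cfg1 cs x : x \notin Cset v -> badc cs 8 (M1 (rowof x)) = false.
Proof.
move=> h; apply: (config e_sym e_irr Hfree Hanti cs (vs := [:: x])) => //=; first by rewrite h.
by case=> [|[]] [|[]].
Qed.

Lemma cfg2 cs x u : x \notin Cset v -> u \notin Cset v -> x != u ->
  badc cs 9 (M2 (rowof x) (rowof u) (e x u)) = false.
Proof.
move=> hx hu hxu; apply: (config e_sym e_irr Hfree Hanti cs (vs := [:: x; u])) => /=.
- by rewrite inE hxu.
- by rewrite hx hu.
- by case=> [|[|i]] [|[|j]] //= _ _ _; rewrite e_sym.
Qed.

Lemma cfg3 cs y0 y1 y2 : y0 \notin Cset v -> y1 \notin Cset v -> y2 \notin Cset v ->
  uniq [:: y0; y1; y2] ->
  badc cs 10 (M3 [:: rowof y0; rowof y1; rowof y2] (e y0 y1) (e y0 y2) (e y1 y2)) = false.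
Proof.
move=> h0 h1 h2 hu; apply: (config e_sym e_irr Hfree Hanti cs (vs := [:: y0; y1; y2])) => //=.
- by rewrite h0 h1 h2.
- by case=> [|[|[|i]]] [|[|[|j]]] //= _ _ _; rewrite e_sym.
Qed.

Lemma cfg4 cs y0 y1 y2 y3 : y0 \notin Cset v -> y1 \notin Cset v -> y2 \notin Cset v ->
  y3 \notin Cset v -> uniq [:: y0; y1; y2; y3] ->
  badc cs 11 (M4 [:: rowof y0; rowof y1; rowof y2; rowof y3]
     (e y0 y1) (e y0 y2) (e y0 y3) (e y1 y2) (e y1 y3) (e y2 y3)) = false.
Proof.
move=> h0 h1 h2 h3 hu; apply: (config e_sym e_irr Hfree Hanti cs (vs := [:: y0; y1; y2; y3])) => //=.
- by rewrite h0 h1 h2 h3.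
- by case=> [|[|[|[|i]]]] [|[|[|[|j]]]] //= _ _ _; rewrite e_sym.
Qed.

Lemma memb b : b \in bools.
Proof. by case: b. Qed.

Lemma orBF c : orB c false = c.
Proof. by case: c. Qed.

Lemma orB_l c b : orB c b -> b = false -> c.
Proof. by case: c => //= -> . Qed.

Lemma neq_adj x y : e x y -> x != y.
Proof. by move=> h; apply: contraTneq h => ->; rewrite e_irr. Qed.

Lemma small_prop x : is_small e v x -> x \notin Cset v /\ smallb (rowof x).
Proof.
case=> hx hnl hnb; have [hc hnz] := X_prop hx; split => //.
rewrite /smallb hnz /=; apply/andP; split.
  by apply/negP => /(leafb_leaf hx).
by apply/negP => /(bigb_big e_irr Hanti hx).
Qed.

Lemma small_notYZ x : is_small e v x -> x \notin Yset e v :|: Zall e v.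
Proof.
case=> hx hnl _; rewrite in_setU negb_or; apply/andP; split.
  by rewrite /Yset in_setC in_setU hx orbT.
apply/negP => /Zall_prop [l]; rewrite inE => /andP [_ /eqP h]; apply: hnl.
by exists l.
Qed.

Lemma P4a x y : is_small e v x -> y \in Yset e v :|: Zall e v -> e x y ->
  (consecb 3 (rowof x) || consecb 4 (rowof x)) &&
  all (fun j => (~~ bit (rowof x) j && (rowof y == ind j)) ==>
    [&& bit (rowof x) (j+2), bit (rowof x) (j+3), bit (rowof x) (j+4), bit (rowof x) (j+5),
        ~~ bit (rowof x) (j+6) & ~~ bit (rowof x) (j+1)]) (iota 0 7).
Proof.
move=> hs hy hxy; have [hc hsm] := small_prop hs; have [hyc hyt] := YZ_types hy.
have hb := cfg2 candsE4a hc hyc (neq_adj hxy); rewrite hxy in hb.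
have hSM : rowof x \in SM by rewrite mem_filter hsm rowof_rows7.
have := E4aT; rewrite /E4a => /allP /(_ _ hSM) /allP /(_ _ hyt).
by rewrite hb orBF.
Qed.


Lemma idx_eq (l : 'I_7) k : (nat_of_ord l == k %% 7) -> l = idx k.
Proof. by move/eqP => h; apply/eqP; rewrite -val_eqE /= /idx inordK ?ltn_pmod // h. Qed.

Lemma main_sec :
  (forall x, x \in Xset e v -> forall i : 'I_7,
     e x (vv v i) -> e x (vv v (i + 1)) ->
     e x (vv v (i + 6)) || e x (vv v (i + 2))) /\
  (forall x, x \in Xset e v -> is_small e v x \/ is_leaf e v x ->
     (exists i : 'I_7, [/\ ~~ e x (vv v (i + 6)), ~~ e x (vv v (i + 2)) &
                          e x (vv v i) != e x (vv v (i + 1))])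
     \/ consec 3 (NC e v x) \/ consec 4 (NC e v x)) /\
  (forall (l : 'I_7) x u, x \in Xset e v -> x \notin Zset e v l ->
     u \in Yset e v :|: Zset e v l -> e x u ->
     [/\ ~ is_leaf e v x,
         (forall i : 'I_7, e x (vv v i) -> ~~ e x (vv v (i + 6)) ->
            ~~ e x (vv v (i + 1)) -> ~~ e x (vv v (i + 2)) ->
            u \in Zset e v l /\
            (l = idx i \/ l = idx (i + 1) \/ l = idx (i + 2))) &
         (forall w, w \in Yset e v :|: Zset e v l -> e u w -> ~~ e x w ->
            contains5consec e v x)]) /\
  (forall x, is_small e v x -> (exists u, u \in Yset e v :|: Zall e v /\ e x u) ->
     (consec 3 (NC e v x) \/ consec 4 (NC e v x)) /\
     (forall j : 'I_7, ~~ e x (v j) ->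
        ((exists z, z \in Zset e v j /\ e x z) ->
           [/\ e x (vv v (j + 2)), e x (vv v (j + 3)), e x (vv v (j + 4)) &
               e x (vv v (j + 5))]) /\
        (Zset e v j != set0 ->
           [/\ ~~ e x (vv v (j + 6)), ~~ e x (v j) & ~~ e x (vv v (j + 1))]))) /\
  (forall x1 x2, is_small e v x1 -> is_small e v x2 -> ~~ e x1 x2 ->
     (exists u, u \in Yset e v :|: Zall e v /\ e x1 u) ->
     (exists u, u \in Yset e v :|: Zall e v /\ e x2 u) ->
     (NC e v x1 \subset NC e v x2) \/ (NC e v x2 \subset NC e v x1)).
Proof.
split.
  move=> x hx i h1 h2; have [hc _] := X_prop hx.
  have := E1T; rewrite /E1 => /allP /(_ _ (rowof_rows7 e v x)).
  rewrite cfg1 // orBF => /allP /(_ i).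
  by rewrite mem_iota ltn_ord !rowof_bit h1 h2 => /(_ isT).
split.
  move=> x hx hsl; have [hc hnz] := X_prop hx.
  have hcond : nz (rowof x) && (~~ bigb (rowof x) || leafb (rowof x)).
    rewrite hnz; case: hsl => [[_ _ hnb]|hl].
      by apply/orP; left; apply/negP => /(bigb_big e_irr Hanti hx).
    by rewrite (leaf_leafb hl) orbT.
  have := E2T; rewrite /E2 => /allP /(_ _ (rowof_rows7 e v x)).
  rewrite hcond cfg1 // orBF => /orP [/orP [/hasP [i hi H]|h3]|h4].
  - left; move: hi; rewrite mem_iota add0n => /andP [_ hi].
    by exists (inord i); rewrite !inordK //; move: H; rewrite !rowof_bit => /and3P.
  - by right; left; apply: consecb_consec.
  - by right; right; apply: consecb_consec.
split.
  move=> l x u hx hxZ hu hxu; have [hc hnz] := X_prop hx.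
  have [huc hut] := YZl_types hu.
  have hb := cfg2 candsE3 hc huc (neq_adj hxu); rewrite hxu in hb.
  have hne : rowof x != ind l.
    apply/negP => /eqP hr; move: hxZ; rewrite inE hx /=; apply/negP/negPn/eqP.
    apply/setP => m; rewrite inE in_set1 -vv_ord -rowof_bit hr /bit modn_small //.
    by rewrite nth_ind.
  have := E3T; rewrite /E3 => /allP /(_ l).
  rewrite mem_iota ltn_ord => /(_ isT) /allP /(_ _ (rowof_rows7 e v x)) /allP /(_ _ hut).
  rewrite hnz hne hb orBF => /andP [/andP [h1 h2] h3].
  split.
  - by move/leaf_leafb => hl; rewrite hl in h1.
  - move=> i hi0 hi6 hi1 hi2; have := allP h2 i; rewrite mem_iota ltn_ord.
    rewrite !rowof_bit hi0 (negbTE hi6) (negbTE hi1) (negbTE hi2) => /(_ isT) /andP [hz hl].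
    split.
      case/setUP: hu => [hy|//]; have [_ hz'] := Y_prop hy.
      by rewrite hz' eqxx in hz.
    by case/or3P: hl => /idx_eq ->; [left|right; left|right; right].
  - move=> w hw huw hxw; have [hwc hwt] := YZl_types hw.
    have hxw' : x != w.
      apply: contraTneq hw => <-.
      by rewrite in_setU negb_or hxZ andbT /Yset in_setC in_setU hx orbT.
    have hU : uniq [:: x; u; w].
      by rewrite /= !inE negb_or hxw' (neq_adj hxu) (neq_adj huw).
    have hb3 := cfg3 candsE3 hc huc hwc hU.
    rewrite hxu (negbTE hxw) huw in hb3.
    have := allP h3 _ hwt; rewrite hb3 orBF => h.
    exact: c5b_c5.
split.
  move=> x hs [u [hu hxu]]; have [hc hsm] := small_prop hs.
  have /andP [hcons _] := P4a hs hu hxu.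
  split.
    by case/orP: hcons => h; [left|right]; apply: consecb_consec.
  move=> j hj.
  have hbj : ~~ bit (rowof x) j by rewrite rowof_bit vv_ord.
  have hzYZ : forall z, z \in Zset e v j -> z \in Yset e v :|: Zall e v.
    by move=> z hz; apply/setUP; right; apply/bigcupP; exists j.
  split.
    move=> [z [hz hxz]]; have /andP [_ /allP /(_ j)] := P4a hs (hzYZ _ hz) hxz.
    have [_ ->] := Z_prop hz; rewrite eqxx hbj mem_iota ltn_ord.
    by rewrite !rowof_bit => /(_ isT) /and5P [-> -> -> -> /andP [_ _]].
  move=> /set0Pn [z hz].
  case hxz: (e x z).
    have /andP [_ /allP /(_ j)] := P4a hs (hzYZ _ hz) hxz.
    have [_ ->] := Z_prop hz; rewrite eqxx hbj mem_iota ltn_ord.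
    by rewrite !rowof_bit => /(_ isT) /and5P [_ _ _ _ /andP [-> ->]].
  have [hzc hzr] := Z_prop hz; have [huc hut] := YZ_types hu.
  have hxz' : x != z.
    by apply: contraTneq (hzYZ _ hz) => <-; apply: small_notYZ.
  have huz : u != z by apply: contraTneq hxu => ->; rewrite hxz.
  have hU : uniq [:: x; u; z].
    by rewrite /= !inE negb_or (neq_adj hxu) hxz' huz.
  have hb3 := cfg3 candsE4b hc huc hzc hU.
  rewrite hxu hxz hzr in hb3.
  have hb2 := cfg2 candsE4b hc huc (neq_adj hxu); rewrite hxu in hb2.
  have hSM : rowof x \in SM by rewrite mem_filter hsm rowof_rows7.
  have := E4bT; rewrite /E4b /E4bf => /allP /(_ j); rewrite mem_iota ltn_ord => /(_ isT).
  move=> /allP /(_ _ hSM); rewrite hbj => /orB_l H.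
  have /andP [h6 h1'] : ~~ bit (rowof x) (j+6) && ~~ bit (rowof x) (j+1).
    apply: H; apply/negP => /allP /(_ _ hut); case: ifP => _; last by rewrite hb2.
    by move=> /allP /(_ (e u z) (memb _)); rewrite hb3.
  by move: h6 h1'; rewrite !rowof_bit => -> ->; rewrite hj.
move=> x1 x2 hs1 hs2 hx12 [u1 [hu1 h1]] [u2 [hu2 h2]].
case: (x1 =P x2) => [<-|hne]; first by left.
case hs12: (subb (rowof x1) (rowof x2)); first by left; apply: subb_sub.
case hs21: (subb (rowof x2) (rowof x1)); first by right; apply: subb_sub.
exfalso.
have [hc1 hsm1] := small_prop hs1; have [hc2 hsm2] := small_prop hs2.
have /andP [hcons1 _] := P4a hs1 hu1 h1; have /andP [hcons2 _] := P4a hs2 hu2 h2.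
have [hu1c ht1] := YZ_types hu1; have [hu2c ht2] := YZ_types hu2.
have hS1 : rowof x1 \in S5 by rewrite mem_filter hsm1 hcons1 rowof_rows7.
have hS2 : rowof x2 \in S5 by rewrite mem_filter hsm2 hcons2 rowof_rows7.
have hb1 := cfg2 candsE5 hc1 hu1c (neq_adj h1); rewrite h1 in hb1.
have hb2 := cfg2 candsE5 hc2 hu2c (neq_adj h2); rewrite h2 in hb2.
have hn1 := small_notYZ hs1; have hn2 := small_notYZ hs2.
have hx2u1 : x2 != u1 by apply: contraTneq hu1 => <-.
have hx1u2 : x1 != u2 by apply: contraTneq hu2 => <-.
have hU1 : uniq [:: x1; x2; u1].
  by rewrite /= !inE negb_or (neq_adj h1) hx2u1 (introN eqP hne).
have hU2 : uniq [:: x1; x2; u2].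
  by rewrite /= !inE negb_or hx1u2 (neq_adj h2) (introN eqP hne).
have hc3 := cfg3 candsE5 hc1 hc2 hu1c hU1; rewrite (negbTE hx12) h1 in hc3.
have hc3' := cfg3 candsE5 hc1 hc2 hu2c hU2; rewrite (negbTE hx12) h2 in hc3'.
have := E5T; rewrite /E5 /E5f => /allP /(_ _ hS1) /allP /(_ _ hS2).
rewrite hs12 hs21 => /allP /(_ _ ht1); case: ifP => _; last by rewrite hb1.
case hx2u1b : (e x2 u1); rewrite hx2u1b in hc3; first by rewrite hc3.
rewrite hc3 => /andP [_ /allP /(_ _ ht2)]; case: ifP => _; last by rewrite hb2.
have neu : u1 != u2 by apply: contraTneq h2 => <-; rewrite hx2u1b.
case hx1u2b : (e x1 u2); rewrite hx1u2b in hc3'; first by rewrite hc3'.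
move=> /andP [_ /allP /(_ (e u1 u2) (memb _))].
have hU : uniq [:: x1; x2; u1; u2].
  rewrite /= !inE !negb_or (neq_adj h1) hx1u2 hx2u1 (neq_adj h2) /=.
  by rewrite (introN eqP hne) neu.
have := cfg4 candsE5 hc1 hc2 hu1c hu2c hU.
by rewrite (negbTE hx12) h1 h2 hx1u2b hx2u1b => ->.
Qed.

End Main.


Theorem lemma1 (T : finType) (e : rel T)
  (e_sym : symmetric e) (e_irr : irreflexive e)
  (Hfree : P6C5_free e) (v : 'I_7 -> T) (Hanti : is_7antihole e v) :
  (* (1) *)
  (forall x, x \in Xset e v -> forall i : 'I_7,
     e x (vv v i) -> e x (vv v (i + 1)) ->
     e x (vv v (i + 6)) || e x (vv v (i + 2))) /\
  (* (2) *)
  (forall x, x \in Xset e v -> is_small e v x \/ is_leaf e v x ->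
     (exists i : 'I_7, [/\ ~~ e x (vv v (i + 6)), ~~ e x (vv v (i + 2)) &
                          e x (vv v i) != e x (vv v (i + 1))])
     \/ consec 3 (NC e v x) \/ consec 4 (NC e v x)) /\
  (* (3) *)
  (forall (l : 'I_7) x u, x \in Xset e v -> x \notin Zset e v l ->
     u \in Yset e v :|: Zset e v l -> e x u ->
     [/\ ~ is_leaf e v x,
         (forall i : 'I_7, e x (vv v i) -> ~~ e x (vv v (i + 6)) ->
            ~~ e x (vv v (i + 1)) -> ~~ e x (vv v (i + 2)) ->
            u \in Zset e v l /\
            (l = idx i \/ l = idx (i + 1) \/ l = idx (i + 2))) &
         (forall w, w \in Yset e v :|: Zset e v l -> e u w -> ~~ e x w ->
            contains5consec e v x)]) /\
  (* (4) *)
  (forall x, is_small e v x -> (exists u, u \in Yset e v :|: Zall e v /\ e x u) ->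
     (consec 3 (NC e v x) \/ consec 4 (NC e v x)) /\
     (forall j : 'I_7, ~~ e x (v j) ->
        ((exists z, z \in Zset e v j /\ e x z) ->
           [/\ e x (vv v (j + 2)), e x (vv v (j + 3)), e x (vv v (j + 4)) &
               e x (vv v (j + 5))]) /\
        (Zset e v j != set0 ->
           [/\ ~~ e x (vv v (j + 6)), ~~ e x (v j) & ~~ e x (vv v (j + 1))]))) /\
  (* (5) *)
  (forall x1 x2, is_small e v x1 -> is_small e v x2 -> ~~ e x1 x2 ->
     (exists u, u \in Yset e v :|: Zall e v /\ e x1 u) ->
     (exists u, u \in Yset e v :|: Zall e v /\ e x2 u) ->
     (NC e v x1 \subset NC e v x2) \/ (NC e v x2 \subset NC e v x1)).
Proof. exact: main_sec. Qed.
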